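(* Let $p\geq5$, let $m_{-1}=0$, $m_0=1$, $m_{n+2}=(p-2)m_{n+1}-m_n$, and write $x=p-2$, $d=p-3$. Then every positive integer $n$ has exactly one representation $n=\sum_{i=0}^k a_i m_i$ with $k\ge 0$ and all $a_i\in\{1,\dots,p-2\}$ such that the word $a_k a_{k-1}\cdots a_0$ contains no factor of the form $x\,d^j\,x$ with $j\ge 0$ (i.e. a digit $p-2$, followed by $j$ digits $p-3$, followed by a digit $p-2$).
   Context: $p\ge5$ is a fixed integer; $m_n$ are the metallic numbers defined by the recurrence in the claim. Words are read with the most significant digit $a_k$ on the left. *)

(* Defs.v *)
From mathcomp Require Import all_boot all_order all_algebra.
Set Implicit Arguments. Unset Strict Implicit. Unset Printing Implicit Defensive.
Import Order.TTheory GRing.Theory Num.Theory.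
Local Open Scope ring_scope.

(* Metallic numbers: metallic p n = m_n, with m_{-1} = 0, m_0 = 1,
   m_{n+2} = (p-2) m_{n+1} - m_n.  Since m_{-1} = 0, m_1 = p - 2. *)
Fixpoint metallic (p : nat) (n : nat) {struct n} : int :=
  match n with
  | 0%N => 1
  | k.+1 =>
    match k with
    | 0%N => (p%:Z - 2)
    | j.+1 => (p%:Z - 2) * metallic p k - metallic p j
    end
  end.

Lemma metallic_rec p n :
  metallic p n.+2 = (p%:Z - 2) * metallic p n.+1 - metallic p n.
Proof. by []. Qed.

(* A digit list ds = [:: a_0; a_1; ...; a_k] (least significant first).
   The word a_k a_{k-1} ... a_0 is (rev ds). *)
Definition word (ds : seq nat) : seq nat := rev ds.

Definition repr_value (p : nat) (ds : seq nat) : int :=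
  \sum_(i < size ds) (nth 0%N ds i)%:Z * metallic p i.

Definition has_forbidden_factor (p : nat) (w : seq nat) : Prop :=
  exists (u v : seq nat) (j : nat),
    w = u ++ [:: (p - 2)%N] ++ nseq j (p - 3)%N ++ [:: (p - 2)%N] ++ v.

Definition admissible (p : nat) (ds : seq nat) : Prop :=
  (0 < size ds)%N /\
  (forall a, a \in ds -> (1 <= a <= p - 2)%N) /\
  ~ has_forbidden_factor p (word ds).

(* Main.v *)
Require Import Defs.
From mathcomp Require Import all_boot all_order all_algebra.
From mathcomp Require Import zify.
Import Order.TTheory GRing.Theory Num.Theory.
Local Open Scope ring_scope.

Fixpoint val (p : nat) (w : seq nat) : int :=
  match w with [::] => 0 | a :: w' => a%:Z * metallic p (size w') + val p w' end.
Fixpoint Ssum (p : nat) (n : nat) : int :=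
  match n with 0%N => 0 | k.+1 => Ssum p k + metallic p k end.
Definition Mp (p n : nat) : int := if n is k.+1 then metallic p k else 0.
Arguments Mp : simpl never.
Lemma MpS p n : Mp p n.+1 = metallic p n.
Proof. by []. Qed.

Definition top (p : nat) (f : bool) : nat := if f then (p - 2)%N else (p - 3)%N.
Fixpoint ok (p : nat) (f : bool) (w : seq nat) : bool :=
  match w with [::] => true
  | a :: w' => (1 <= a <= top p f)%N && ok p (a != top p f) w' end.
Definition hi (p : nat) (f : bool) (n : nat) : int :=
  Ssum p n.+1 - 1 - (if f then 0 else Mp p n).

Lemma SsumS p n : Ssum p n.+1 = Ssum p n + metallic p n.
Proof. by []. Qed.

Lemma met_succ p n : (5 <= p)%N ->
  metallic p n.+1 = (p - 2)%N%:Z * metallic p n - Mp p n.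
Proof.
move=> hp; have E : ((p - 2)%N%:Z = p%:Z - 2) by lia.
rewrite E; case: n => [|n] /=; first by rewrite mulr1 subr0.
by [].
Qed.

Lemma met_pos p n : (5 <= p)%N -> 0 < metallic p n /\ Mp p n <= metallic p n.
Proof.
move=> hp; elim: n => [|n [IH1 IH2]]; first by [].
rewrite met_succ // MpS; split; nia.
Qed.

Lemma Mp_ge0 p n : (5 <= p)%N -> 0 <= Mp p n.
Proof. by move=> hp; case: n => [|n] //; rewrite MpS; have [h _] := met_pos p n hp; lia. Qed.

Lemma Ssum_mono p n k : (5 <= p)%N -> (n <= k)%N -> Ssum p n <= Ssum p k.
Proof.
move=> hp; elim: k => [|k IH]; first by rewrite leqn0 => /eqP ->.
rewrite leq_eqVlt => /orP [/eqP -> //| ]; rewrite ltnS => /IH H /=.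
have [h _] := met_pos p k hp; lia.
Qed.

Lemma val_bounds p f w : (5 <= p)%N -> ok p f w ->
  Ssum p (size w) <= val p w <= hi p f (size w).
Proof.
move=> hp; elim: w f => [|a w IH] f /=; first by rewrite /hi /=; case: f.
move=> /andP [/andP [a1 a2] okw]; have [lo up] := andP (IH _ okw).
rewrite /hi !SsumS met_succ //.
have [m0 mM] := met_pos p (size w) hp.
move: up; rewrite /hi SsumS.
case: f a2 okw => /= a2 okw; case: (eqVneq a) => [ea|na] /= up;
  rewrite ?ea ?MpS; apply/andP; split; nia.
Qed.

Lemma pick (lo m N : int) (c : nat) : 0 < m -> lo + m <= N -> N < lo + (c%:Z + 1) * m ->
  exists a : nat, (1 <= a <= c)%N /\ lo + a%:Z * m <= N < lo + (a%:Z + 1) * m.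
Proof.
move=> m0 h1; elim: c => [|c IH] h2; first by lia.
case: (ltP N (lo + (c%:Z + 1) * m)) => h3.
  have [a [ha hb]] := IH h3; exists a; split => //; lia.
exists c.+1; split; first by rewrite leqnn andbT.
apply/andP; split; lia.
Qed.

Lemma exist_word p k f (N : int) : (5 <= p)%N -> Ssum p k <= N <= hi p f k ->
  exists w, size w = k /\ ok p f w /\ val p w = N.
Proof.
move=> hp; elim: k f N => [|k IH] f N.
  rewrite /hi /Mp /=; case: f => /= h; exists [::]; split => //; split => //=; lia.
move=> /andP [h1 h2].
have [m0 mM] := met_pos p k hp.
move: h1 h2; rewrite /hi !SsumS met_succ // MpS => h1 h2.
case: (leP (Ssum p k + (top p f)%:Z * metallic p k) N) => h3.
  have hb : Ssum p k <= N - (top p f)%:Z * metallic p k <= hi p false k.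
    rewrite /hi SsumS; apply/andP; split; first lia.
    by case: f h2 h3 => /= h2 h3; nia.
  have [w [sw [okw vw]]] := IH false _ hb.
  exists (top p f :: w); split; first by rewrite /= sw.
  split; first by rewrite /= eqxx okw leqnn !andbT; case: f {h2 h3 hb vw} => /=; lia.
  by rewrite /= sw vw; lia.
have := @pick (Ssum p k) (metallic p k) N (top p f).-1 m0 h1.
have -> : ((top p f).-1%:Z + 1 = (top p f)%:Z) by case: f {h2 h3} => /=; lia.
move=> /(_ h3) [a [/andP [a1 a2] /andP [h4 h5]]].
have hb : Ssum p k <= N - a%:Z * metallic p k <= hi p true k.
  rewrite /hi SsumS; apply/andP; split; lia.
have [w [sw [okw vw]]] := IH true _ hb.
exists (a :: w); split; first by rewrite /= sw.
have hne : (a != top p f) by apply/eqP; case: f a2 {h2 h3 h5 hb} => /=; lia.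
split; first by rewrite /= hne okw andbT a1 /=; case: f a2 {h2 h3 h5 hne hb} => /=; lia.
by rewrite /= sw vw; lia.
Qed.

Lemma uniq_word p f w1 w2 : (5 <= p)%N -> size w1 = size w2 ->
  ok p f w1 -> ok p f w2 -> val p w1 = val p w2 -> w1 = w2.
Proof.
move=> hp; elim: w1 f w2 => [|a w1 IH] f [|b w2] //= [sz].
move=> /andP [/andP [a1 a2] ok1] /andP [/andP [b1 b2] ok2] ev.
have [lo1 up1] := andP (val_bounds _ _ _ hp ok1).
have [lo2 up2] := andP (val_bounds _ _ _ hp ok2).
have [m0 mM] := met_pos p (size w1) hp.
move: up1 up2 lo2; rewrite /hi /= -sz => up1 up2 lo2.
have M0 := Mp_ge0 p (size w1) hp.
have hab : a = b.
  move: ev; rewrite -sz => ev.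
  case: (ltngtP a b) => // hab; exfalso.
    have : a%:Z + 1 <= b%:Z by lia.
    move=> h; case: (a != top p f) up1; case: (b != top p f) up2 => up2 up1; nia.
  have : b%:Z + 1 <= a%:Z by lia.
  move=> h; case: (a != top p f) up1; case: (b != top p f) up2 => up2 up1; nia.
subst b; congr (_ :: _); apply: (IH (a != top p f)) => //.
by move: ev; rewrite -sz; lia.
Qed.

Definition bad (p : nat) (w : seq nat) : Prop :=
  exists (u v : seq nat) (j : nat),
    w = u ++ [:: (p - 2)%N] ++ nseq j (p - 3)%N ++ [:: (p - 2)%N] ++ v.

Lemma bad_cons p b w : bad p w -> bad p (b :: w).
Proof. by move=> [u [v [j ->]]]; exists (b :: u), v, j. Qed.

Lemma bad_nil p : ~ bad p [::].
Proof. by move=> [[|? ?] [v [j]]]. Qed.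

Lemma bad_inv p a w : bad p (a :: w) ->
  (a = (p - 2)%N /\ exists j v, w = nseq j (p - 3)%N ++ (p - 2)%N :: v) \/ bad p w.
Proof.
move=> [[|c u] [v [j /= [-> E]]]].
  by left; split => //; exists j, v.
by right; exists u, v, j.
Qed.

Lemma ok_notbad p w : (5 <= p)%N ->
  (ok p true w -> ~ bad p w) /\ (ok p false w -> ~ bad p ((p - 2)%N :: w)).
Proof.
move=> hp; elim: w => [|a w [IH1 IH2]].
  split => _; first exact: bad_nil.
  by move=> /bad_inv [[_ [j [v]]] | /bad_nil //]; case: j.
split => /= /andP [/andP [a1 a2] okw].
  move=> /bad_inv [[ea [j [v ew]]] | bw].
    rewrite ea eqxx /= in okw; apply: (IH2 okw).
    by exists [::], v, j; rewrite ew.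
  case: eqP okw => [ea | na] okw /=.
    by apply: (IH2 okw); apply: bad_cons.
  exact: IH1 okw bw.
move=> /bad_inv [[_ [j [v ew]]] | bw].
  case: j ew => [|j] /= [ea ew]; first by lia.
  rewrite ea eqxx in okw; apply: (IH2 okw).
  by exists [::], v, j; rewrite ew.
move: bw => /bad_inv [[ea _] | bw]; first by lia.
case: eqP okw => [ea | na] okw /=.
  by apply: (IH2 okw); apply: bad_cons.
exact: IH1 okw bw.
Qed.

Lemma notbad_ok p w : (5 <= p)%N -> (forall a, a \in w -> (1 <= a <= p - 2)%N) ->
  (~ bad p w -> ok p true w) /\ (~ bad p ((p - 2)%N :: w) -> ok p false w).
Proof.
move=> hp; elim: w => [|a w IH] hw; first by [].
have [ha1 ha2] : (1 <= a)%N /\ (a <= p - 2)%N.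
  by have /andP [] := hw a (mem_head _ _).
have [IH1 IH2] := IH (fun b hb => hw b ltac:(by rewrite inE hb orbT)).
split => /= nb.
  rewrite ha1 ha2 /=; case: eqP => [ea | na] /=.
    by apply: IH2; rewrite -ea.
  by apply: IH1 => bw; apply: nb; apply: bad_cons.
have nx : a <> (p - 2)%N.
  by move=> ea; apply: nb; exists [::], w, 0%N; rewrite ea.
rewrite ha1 /=; apply/andP; split; first by lia.
case: eqP => [ea | na] /=.
  apply: IH2 => /bad_inv [[_ [j [v ew]]] | bw].
    by apply: nb; exists [::], v, j.+1; rewrite ew ea.
  by apply: nb; do 2 apply: bad_cons.
by apply: IH1 => bw; apply: nb; do 2 apply: bad_cons.
Qed.

Lemma val_rev p ds : repr_value p ds = val p (rev ds).
Proof.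
elim/last_ind: ds => [|ds a IH]; first by rewrite /repr_value big_ord0.
rewrite rev_rcons /= size_rev -IH /repr_value size_rcons big_ord_recr /=.
rewrite nth_rcons ltnn eqxx addrC; congr (_ + _).
by apply: eq_bigr => i _; rewrite nth_rcons ltn_ord.
Qed.

Lemma ok_range p f w : (5 <= p)%N -> ok p f w -> forall a, a \in w -> (1 <= a <= p - 2)%N.
Proof.
move=> hp; elim: w f => [|b w IH] f //= /andP [/andP [b1 b2] okw] a.
rewrite inE => /orP [/eqP -> | hin]; last exact: IH okw a hin.
by rewrite b1 /=; case: f b2 {okw} => /= b2; lia.
Qed.

Lemma adm_ok p ds : (5 <= p)%N -> admissible p ds <-> (0 < size ds)%N /\ ok p true (rev ds).
Proof.
move=> hp; split.
  move=> [s [hd nb]]; split => //.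
  have hw : forall a, a \in rev ds -> (1 <= a <= p - 2)%N by move=> a; rewrite mem_rev; apply: hd.
  by apply: (proj1 (notbad_ok _ _ hp hw)); exact: nb.
move=> [s okw]; split => //; split.
  by move=> a; rewrite -mem_rev; exact: (ok_range _ _ _ hp okw).
exact: (proj1 (ok_notbad _ _ hp)) okw.
Qed.

Lemma find_len p (n : nat) : (5 <= p)%N -> exists k, Ssum p k <= n%:Z < Ssum p k.+1.
Proof.
move=> hp; elim: n => [|n [k /andP [h1 h2]]]; first by exists 0%N.
have [m1 _] := met_pos p k.+1 hp.
case: (ltP n.+1%:Z (Ssum p k.+1)) => h3.
  by exists k; apply/andP; split => //; lia.
exists k.+1; rewrite (SsumS p k.+1); apply/andP; split; lia.
Qed.

Theorem corollary2 (p : nat) (hp : (5 <= p)%N) (n : nat) (hn : (0 < n)%N) :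
  exists! ds : seq nat, admissible p ds /\ n%:Z = repr_value p ds.
Proof.
have [k /andP [hk1 hk2]] := find_len p n hp.
have k0 : (0 < k)%N.
  by case: k hk1 hk2 => // _; rewrite /= /Ssum /=; lia.
have hb : Ssum p k <= n%:Z <= hi p true k by rewrite /hi; apply/andP; split; lia.
have [w [sw [okw vw]]] := exist_word p k true n%:Z hp hb.
exists (rev w); split.
  split; last by rewrite val_rev revK.
  by apply/adm_ok => //; rewrite size_rev sw revK.
move=> ds' [/(adm_ok _ _ hp) [s' ok'] ev'].
rewrite val_rev in ev'.
have [lo' up'] := andP (val_bounds _ _ _ hp ok').
move: up'; rewrite /hi => up'.
have ek : size (rev ds') = k.
  case: (ltngtP (size (rev ds')) k) => // hlt; exfalso.
    have := Ssum_mono p _ _ hp hlt; lia.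
  have := Ssum_mono p _ _ hp hlt; lia.
have := uniq_word p true (rev ds') w hp ltac:(by rewrite ek sw) ok' okw ltac:(by rewrite vw -ev').
by move=> e; rewrite -e revK.
Qed.
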